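(* Let $R>1$ and let $f$ be a circular tractrix with parameter $R$ and constants $c_1,c_2$ with $c_1^2+c_2^2=1$. Then $f'(t)=0$ if and only if $t=0$, and both arcs $f|_{[0,\infty)}$ and $f|_{(-\infty,0]}$ have infinite length.
   Context: Fix $R>1$, $\lambda=\frac{\sqrt{R^2-1}}{R}$, and real constants $c_1,c_2$ with $c_1^2+c_2^2=1$. The circular tractrix is $f(t)=\big(\xi_1\cos\tfrac tR+\xi_2\sin\tfrac tR,\ -\xi_2\cos\tfrac tR+\xi_1\sin\tfrac tR,\ \xi_3\big)$, $t\in\mathbb R$, with $\xi_1=\frac{(R-\frac1R)\cosh\lambda t}{\frac{c_1}{R}+\cosh\lambda t}$, $\xi_2=\frac{\lambda\sinh\lambda t}{\frac{c_1}{R}+\cosh\lambda t}$, $\xi_3=\frac{\lambda c_2}{\frac{c_1}{R}+\cosh\lambda t}$. *)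

(* Defs.v *)
From Stdlib Require Import Reals.
From Coquelicot Require Import Coquelicot.
Open Scope R_scope.

Definition lam (Rr : R) : R := sqrt (Rr ^ 2 - 1) / Rr.

Definition den (Rr c1 t : R) : R := c1 / Rr + cosh (lam Rr * t).

Definition xi1 (Rr c1 t : R) : R := (Rr - 1 / Rr) * cosh (lam Rr * t) / den Rr c1 t.
Definition xi2 (Rr c1 t : R) : R := lam Rr * sinh (lam Rr * t) / den Rr c1 t.
Definition xi3 (Rr c1 c2 t : R) : R := lam Rr * c2 / den Rr c1 t.

Definition trx1 (Rr c1 t : R) : R :=
  xi1 Rr c1 t * cos (t / Rr) + xi2 Rr c1 t * sin (t / Rr).
Definition trx2 (Rr c1 t : R) : R :=
  - xi2 Rr c1 t * cos (t / Rr) + xi1 Rr c1 t * sin (t / Rr).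
Definition trx3 (Rr c1 c2 t : R) : R := xi3 Rr c1 c2 t.

Definition speed (Rr c1 c2 t : R) : R :=
  sqrt (Derive (trx1 Rr c1) t ^ 2 + Derive (trx2 Rr c1) t ^ 2
        + Derive (trx3 Rr c1 c2) t ^ 2).

Definition arc_length (Rr c1 c2 a b : R) : R := RInt (speed Rr c1 c2) a b.

(* Main.v *)
Require Import Defs.
From Stdlib Require Import Reals Lra Psatz.
From Coquelicot Require Import Coquelicot.
Open Scope R_scope.

Lemma cosh_sinh_id x : cosh x ^ 2 - sinh x ^ 2 = 1.
Proof. unfold cosh, sinh. rewrite exp_Ropp. field. apply Rgt_not_eq, exp_pos. Qed.

Lemma cosh_ge1 x : 1 <= cosh x.
Proof. pose proof (cosh_sinh_id x). unfold cosh in *. pose proof (exp_pos x). pose proof (exp_pos (-x)). nra. Qed.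

Section S.
Variables Rr c1 c2 : R.
Hypothesis hR : 1 < Rr.
Hypothesis hc : c1 ^ 2 + c2 ^ 2 = 1.

Let l := lam Rr.
Definition K := Rr - 1 / Rr.
Definition Cc t := cosh (l * t).
Definition Ss t := sinh (l * t).
Definition D t := den Rr c1 t.

Lemma D_pos t : 0 < D t.
Proof.
  unfold D, den. pose proof (cosh_ge1 (lam Rr * t)).
  assert (-1 <= c1) by nra. assert (0 < / Rr < 1).
  { split. apply Rinv_0_lt_compat; lra. rewrite <- Rinv_1. apply Rinv_lt_contravar; lra. }
  unfold Rdiv. nra.
Qed.

Lemma D2pos x : 0 < c1 * 2 + (exp x + exp (- x)) * Rr.
Proof. pose proof (cosh_ge1 x). unfold cosh in *. assert (-1 <= c1) by nra. nra. Qed.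

Definition dxi1 t := K * (l * Ss t) * D t - K * Cc t * (l * Ss t).
Definition dxi1' t := dxi1 t / D t ^ 2.
Definition dxi2' t := (l * (l * Cc t) * D t - l * Ss t * (l * Ss t)) / D t ^ 2.
Definition dxi3' t := - (l * c2 * (l * Ss t)) / D t ^ 2.

Definition d1 t := dxi1' t * cos (t / Rr) + xi1 Rr c1 t * (- sin (t / Rr) / Rr)
  + dxi2' t * sin (t / Rr) + xi2 Rr c1 t * (cos (t / Rr) / Rr).
Definition d2 t := - dxi2' t * cos (t / Rr) + - xi2 Rr c1 t * (- sin (t / Rr) / Rr)
  + dxi1' t * sin (t / Rr) + xi1 Rr c1 t * (cos (t / Rr) / Rr).

Lemma der1 t : is_derive (trx1 Rr c1) t (d1 t).
Proof.
  pose proof (D_pos t) as HD. assert (Rr <> 0) by lra.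
  unfold K, trx1, d1, dxi1', dxi1, dxi2', xi1, xi2, D, den, Cc, Ss, l in *.
  unfold cosh, sinh in *. auto_derive.
  - repeat split; lra.
  - unfold K. set (E1 := exp (lam Rr * t)). set (E2 := exp (- (lam Rr * t))). set (co := cos (t / Rr)). set (si := sin (t / Rr)). set (L := lam Rr). replace (t * / Rr) with (t / Rr) by reflexivity. fold co si. field. split; [lra|]. apply Rgt_not_eq, D2pos.
Qed.

Definition d3 t := dxi3' t.

Lemma der2 t : is_derive (trx2 Rr c1) t (d2 t).
Proof.
  pose proof (D_pos t) as HD. assert (Rr <> 0) by lra.
  unfold trx2, d2, dxi1', dxi1, K, dxi2', xi1, xi2, D, den, Cc, Ss, l in *.
  unfold cosh, sinh in *. auto_derive.
  - repeat split; lra.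
  - set (E1 := exp (lam Rr * t)). set (E2 := exp (- (lam Rr * t))). set (co := cos (t / Rr)). set (si := sin (t / Rr)). set (L := lam Rr). replace (t * / Rr) with (t / Rr) by reflexivity. fold co si. field. split; [lra|]. apply Rgt_not_eq, D2pos.
Qed.

Lemma der3 t : is_derive (trx3 Rr c1 c2) t (d3 t).
Proof.
  pose proof (D_pos t) as HD. assert (Rr <> 0) by lra.
  unfold trx3, d3, dxi3', xi3, D, den, Cc, Ss, l in *.
  unfold cosh, sinh in *. auto_derive.
  - repeat split; lra.
  - set (E1 := exp (lam Rr * t)). set (E2 := exp (- (lam Rr * t))). set (L := lam Rr). field. split; [lra|]. apply Rgt_not_eq, D2pos.
Qed.

Lemma l_pos : 0 < l.
Proof. unfold l, lam. apply Rdiv_lt_0_compat; [apply sqrt_lt_R0; nra|lra]. Qed.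

Lemma l2 : l * l = (Rr - 1 / Rr) / Rr.
Proof.
  assert (Hs : sqrt (Rr^2-1) * sqrt (Rr^2-1) = Rr^2-1) by (apply sqrt_sqrt; nra).
  unfold l, lam. replace (sqrt (Rr ^ 2 - 1) / Rr * (sqrt (Rr ^ 2 - 1) / Rr)) with
   (sqrt (Rr^2-1) * sqrt (Rr^2-1) / (Rr * Rr)) by (field; lra).
  rewrite Hs. field. lra.
Qed.

Definition A t := dxi1' t + xi2 Rr c1 t / Rr.
Definition B t := - dxi2' t + xi1 Rr c1 t / Rr.

Lemma d1_eq t : d1 t = A t * cos (t / Rr) - B t * sin (t / Rr).
Proof. unfold d1, A, B. field. lra. Qed.
Lemma d2_eq t : d2 t = B t * cos (t / Rr) + A t * sin (t / Rr).
Proof. unfold d2, A, B. field. lra. Qed.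

Lemma B_eq t : B t = l ^ 2 * Ss t ^ 2 / D t ^ 2.
Proof.
  pose proof (D_pos t). unfold B, dxi2', xi1. unfold D in *.
  replace (Rr - 1 / Rr) with (l * l * Rr) by (rewrite l2; field; lra).
  unfold Cc, Ss, l. field. lra.
Qed.

Lemma B_d t : B t = d2 t * cos (t / Rr) - d1 t * sin (t / Rr).
Proof.
  rewrite d1_eq, d2_eq. pose proof (sin2_cos2 (t / Rr)). unfold Rsqr in *.
  transitivity (B t * (sin (t/Rr) * sin (t/Rr) + cos (t/Rr) * cos (t/Rr))).
  rewrite H; ring. ring.
Qed.

Lemma B_le t : B t ^ 2 <= d1 t ^ 2 + d2 t ^ 2.
Proof.
  rewrite B_d. pose proof (sin2_cos2 (t / Rr)). unfold Rsqr in *.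
  set (co := cos (t / Rr)) in *. set (si := sin (t / Rr)) in *.
  assert (d1 t ^ 2 + d2 t ^ 2 - (d2 t * co - d1 t * si) ^ 2 = (d1 t * co + d2 t * si)^2
    + (d1 t ^ 2 + d2 t ^ 2) * (1 - (si * si + co * co))) by ring.
  rewrite H in H0. replace (1 - 1) with 0 in H0 by ring.
  pose proof (pow2_ge_0 (d1 t * co + d2 t * si)). lra.
Qed.

Lemma Der1 t : Derive (trx1 Rr c1) t = d1 t.
Proof. apply is_derive_unique, der1. Qed.
Lemma Der2 t : Derive (trx2 Rr c1) t = d2 t.
Proof. apply is_derive_unique, der2. Qed.
Lemma Der3 t : Derive (trx3 Rr c1 c2) t = d3 t.
Proof. apply is_derive_unique, der3. Qed.

Lemma part1 t : (Derive (trx1 Rr c1) t = 0 /\ Derive (trx2 Rr c1) t = 0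
      /\ Derive (trx3 Rr c1 c2) t = 0) <-> t = 0.
Proof.
  rewrite Der1, Der2, Der3. pose proof l_pos. split.
  - intros [h1 [h2 _]]. assert (HB : B t = 0) by (rewrite B_d, h1, h2; ring).
    rewrite B_eq in HB. pose proof (D_pos t).
    assert (HS : Ss t = 0).
    { assert (l ^ 2 * Ss t ^ 2 = 0).
      { replace (l ^ 2 * Ss t ^ 2) with (l ^ 2 * Ss t ^ 2 / D t ^ 2 * D t ^ 2) by (field; lra).
        rewrite HB; ring. }
      assert (0 < l ^ 2) by (apply pow_lt; exact l_pos).
      destruct (Rmult_integral _ _ H1) as [h|h]; [lra| simpl in h; rewrite Rmult_1_r in h; destruct (Rmult_integral _ _ h); auto]. }
    unfold Ss, sinh in HS. assert (HE : exp (l * t) = exp (- (l * t))) by lra.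
    apply exp_inv in HE. nra.
  - intros ->. assert (HS : Ss 0 = 0) by (unfold Ss; rewrite Rmult_0_r; apply sinh_0).
    assert (HA : A 0 = 0).
    { unfold A, dxi1', dxi1, xi2. fold l. replace (sinh (l * 0)) with (Ss 0) by reflexivity.
      rewrite HS. unfold Rdiv. ring. }
    rewrite d1_eq, d2_eq, B_eq, HA, HS. unfold d3, dxi3'. rewrite HS.
    unfold Rdiv. repeat split; ring.
Qed.

Lemma speed_ge t : l ^ 2 * Ss t ^ 2 / D t ^ 2 <= speed Rr c1 c2 t.
Proof.
  unfold speed. rewrite Der1, Der2, Der3. rewrite <- B_eq.
  assert (0 <= B t).
  { rewrite B_eq. pose proof (D_pos t). apply Rmult_le_pos.
    apply Rmult_le_pos; apply pow2_ge_0. left; apply Rinv_0_lt_compat; nra. }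
  rewrite <- (sqrt_pow2 (B t)) at 1 by auto. apply sqrt_le_1_alt.
  pose proof (B_le t). pose proof (pow2_ge_0 (d3 t)). lra.
Qed.

Lemma speed_big t : 3 <= Cc t -> l ^ 2 / 2 <= speed Rr c1 c2 t.
Proof.
  intros HC. eapply Rle_trans; [|apply speed_ge].
  pose proof (D_pos t). pose proof (cosh_sinh_id (l * t)). fold (Cc t) (Ss t) in H0.
  assert (D t <= 1 + Cc t).
  { unfold D, den, Cc. fold l. assert (c1 <= 1) by nra.
    assert (0 < / Rr < 1).
    { split. apply Rinv_0_lt_compat; lra. rewrite <- Rinv_1. apply Rinv_lt_contravar; lra. }
    unfold Rdiv. nra. }
  assert (D t ^ 2 <= 2 * Ss t ^ 2) by nra.
  pose proof l_pos.
  apply (Rmult_le_reg_r (D t ^ 2)). nra.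
  replace (l ^ 2 * Ss t ^ 2 / D t ^ 2 * D t ^ 2) with (l ^ 2 * Ss t ^ 2) by (field; lra).
  nra.
Qed.

Lemma speed_nonneg t : 0 <= speed Rr c1 c2 t.
Proof. unfold speed. apply sqrt_pos. Qed.

Lemma Cc_big t : 5 <= Rabs (l * t) -> 3 <= Cc t.
Proof.
  intros H. unfold Cc, cosh. pose proof (exp_pos (l*t)). pose proof (exp_pos (- (l*t))).
  destruct (Rle_or_lt 0 (l * t)).
  - rewrite Rabs_right in H by lra. pose proof (exp_ineq1 (l * t)). lra.
  - rewrite Rabs_left in H by lra. pose proof (exp_ineq1 (- (l * t))). lra.
Qed.

Lemma speed_cont z : continuous (speed Rr c1 c2) z.
Proof.
  apply continuous_ext with (f := fun x => sqrt (d1 x ^ 2 + d2 x ^ 2 + d3 x ^ 2)).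
  { intros x. unfold speed. rewrite Der1, Der2, Der3. reflexivity. }
  apply continuous_sqrt_comp. apply (@ex_derive_continuous R_AbsRing R_NormedModule).
  pose proof (D_pos z) as HD. assert (Rr <> 0) by lra.
  unfold d1, d2, d3, dxi1', dxi1, K, dxi2', dxi3', xi1, xi2, D, den, Cc, Ss, l in *.
  unfold cosh, sinh in *. auto_derive.
  assert (Hne : c1 / Rr + (exp (lam Rr * z) + exp (- (lam Rr * z))) * / 2 <> 0) by lra.
  repeat split; try exact Hne; rewrite Rmult_1_r; apply Rmult_integral_contrapositive_currified; exact Hne.
Qed.
Lemma exR a b : ex_RInt (speed Rr c1 c2) a b.
Proof. apply (@ex_RInt_continuous R_CompleteNormedModule). intros; apply speed_cont. Qed.

Lemma RInt_lb a b c : a <= b -> (forall x, a < x < b -> c <= speed Rr c1 c2 x) ->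
  (b - a) * c <= RInt (speed Rr c1 c2) a b.
Proof.
  intros Hab Hx. replace ((b - a) * c) with (RInt (fun _ => c) a b).
  - apply RInt_le; auto. apply ex_RInt_const. apply exR.
  - rewrite RInt_const. reflexivity.
Qed.

Lemma arc_pos M : exists T, 0 < T /\ M < arc_length Rr c1 c2 0 T.
Proof.
  pose proof l_pos as Hl. set (t0 := 5 / l). assert (Ht0 : 0 < t0) by (unfold t0; apply Rdiv_lt_0_compat; lra).
  assert (Hl2 : 0 < l ^ 2) by (apply pow_lt; exact Hl).
  set (T := t0 + 2 * Rabs M / l ^ 2 + 1).
  assert (HM : 0 <= 2 * Rabs M / l ^ 2) by (apply Rmult_le_pos; [pose proof (Rabs_pos M); lra| left; apply Rinv_0_lt_compat; lra]).
  exists T. split. unfold T; lra.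
  unfold arc_length. rewrite <- (RInt_Chasles _ 0 t0 T) by apply exR.
  change (plus ?a ?b) with (a + b).
  assert (H1 : 0 <= RInt (speed Rr c1 c2) 0 t0).
  { apply RInt_ge_0. lra. apply exR. intros; apply speed_nonneg. }
  assert (H2 : (T - t0) * (l ^ 2 / 2) <= RInt (speed Rr c1 c2) t0 T).
  { apply RInt_lb. unfold T; lra. intros x Hx. apply speed_big, Cc_big.
    assert (l * t0 = 5) by (unfold t0; field; lra).
    rewrite Rabs_right; nra. }
  assert (T - t0 = 2 * Rabs M / l ^ 2 + 1) by (unfold T; ring).
  rewrite H in H2. replace ((2 * Rabs M / l ^ 2 + 1) * (l ^ 2 / 2)) with (Rabs M + l^2/2) in H2 by (field; lra).
  pose proof (Rle_abs M). lra.
Qed.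

Lemma arc_neg M : exists T, 0 < T /\ M < arc_length Rr c1 c2 (- T) 0.
Proof.
  pose proof l_pos as Hl. set (t0 := 5 / l). assert (Ht0 : 0 < t0) by (unfold t0; apply Rdiv_lt_0_compat; lra).
  assert (Hl2 : 0 < l ^ 2) by (apply pow_lt; exact Hl).
  set (T := t0 + 2 * Rabs M / l ^ 2 + 1).
  assert (HM : 0 <= 2 * Rabs M / l ^ 2) by (apply Rmult_le_pos; [pose proof (Rabs_pos M); lra| left; apply Rinv_0_lt_compat; lra]).
  exists T. split. unfold T; lra.
  unfold arc_length. rewrite <- (RInt_Chasles _ (- T) (- t0) 0) by apply exR.
  change (plus ?a ?b) with (a + b).
  assert (H1 : 0 <= RInt (speed Rr c1 c2) (- t0) 0).
  { apply RInt_ge_0. lra. apply exR. intros; apply speed_nonneg. }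
  assert (H2 : (- t0 - - T) * (l ^ 2 / 2) <= RInt (speed Rr c1 c2) (- T) (- t0)).
  { apply RInt_lb. unfold T; lra. intros x Hx. apply speed_big, Cc_big.
    assert (l * t0 = 5) by (unfold t0; field; lra).
    rewrite Rabs_left; nra. }
  assert (- t0 - - T = 2 * Rabs M / l ^ 2 + 1) by (unfold T; ring).
  rewrite H in H2. replace ((2 * Rabs M / l ^ 2 + 1) * (l ^ 2 / 2)) with (Rabs M + l^2/2) in H2 by (field; lra).
  pose proof (Rle_abs M). lra.
Qed.

End S.

Theorem mainTheorem2 (Rr c1 c2 : R) (hR : 1 < Rr) (hc : c1 ^ 2 + c2 ^ 2 = 1) :
  (forall t : R,
     (Derive (trx1 Rr c1) t = 0 /\ Derive (trx2 Rr c1) t = 0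
      /\ Derive (trx3 Rr c1 c2) t = 0) <-> t = 0)
  /\ (forall M : R, exists T : R, 0 < T /\ M < arc_length Rr c1 c2 0 T)
  /\ (forall M : R, exists T : R, 0 < T /\ M < arc_length Rr c1 c2 (- T) 0).
Proof.
  split; [|split]; intros.
  - apply part1; auto.
  - apply arc_pos; auto.
  - apply arc_neg; auto.
Qed.
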